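(* For every instance $I$ of the Bilevel Shortest Path problem (on a directed or an undirected graph), $\mathrm{OPT}_{\mathrm{str}}(I)\le\mathrm{OPT}_{\mathrm{weak}}(I)$.
   Context: An instance is $I=(G,E^\ell,E^f,s,t,c,d)$: $G=(V,E)$ a simple directed or undirected graph, $E=E^\ell\cup E^f$ a partition into leader's and follower's edges, $s,t\in V$, $c,d:E\to\mathbb{R}_{\ge0}$; $f(Z)=\sum_{e\in Z}f(e)$. Paths are simple, identified with edge sets; $\mathcal P_{st}$ (the $s$-$t$-paths) is nonempty. $\mathrm{OPT}_{\mathrm{str}}(I)=\min c(X\cup Y)$ over $X\subseteq E^\ell$, $Y\in\arg\min\{d(Y'):Y'\subseteq E^f,\ X\cup Y'\in\mathcal P_{st}\}$. $\mathrm{OPT}_{\mathrm{weak}}(I)$ is the same but with the follower's constraint that $X\cup Y'$ contains some path of $\mathcal P_{st}$. Leader choices making the follower's problem infeasible are infeasible; optimistic setting: among follower-optimal responses the one minimizing the leader's cost is chosen. *)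

(* Defs.v *)
From HB Require Import structures.
From mathcomp Require Import all_boot all_order all_algebra.
From mathcomp Require Import boolp classical_sets reals constructive_ereal ereal.
Set Implicit Arguments. Unset Strict Implicit. Unset Printing Implicit Defensive.
Import Order.TTheory GRing.Theory Num.Theory.
Local Open Scope ring_scope.
Section BSP.
Variables (V E : finType).
(* A graph on vertex set V with edge set E; edge e has endpoints tl e, hd e.
   If [directed] is true, e is the arc (tl e, hd e); otherwise e is the
   undirected edge {tl e, hd e}. *)
Variables (directed : bool) (tl hd : E -> V).

Definition simple_graph : Prop :=
  (forall e, tl e != hd e) /\
  (forall e e', (if directed then (tl e, hd e) == (tl e', hd e')
                 else ((tl e == tl e') && (hd e == hd e')) ||
                      ((tl e == hd e') && (hd e == tl e'))) ->
                e = e').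

Definition joins (e : E) (u v : V) : bool :=
  if directed then (tl e == u) && (hd e == v)
  else ((tl e == u) && (hd e == v)) || ((tl e == v) && (hd e == u)).

(* P (an edge set) is a simple s-t path: there are pairwise distinct vertices
   s = v_0, v_1, ..., v_k = t and edges e_1..e_k with e_i joining v_(i-1), v_i,
   and P = {e_1, ..., e_k}. *)
Definition st_path (s t : V) (P : {set E}) : Prop :=
  exists (vs : seq V) (es : seq E),
    [/\ size es = size vs, uniq (s :: vs), last s vs = t,
        all (fun p => joins p.1 p.2.1 p.2.2) (zip es (zip (s :: vs) vs))
      & P = [set e in es]].
End BSP.

Definition cost (R : numDomainType) (E : finType) (f : E -> R) (Z : {set E}) : R :=
  \sum_(e in Z) f e.

Section Bilevel.
Variables (R : realType) (V E : finType) (directed : bool) (tl hd : E -> V).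
Variables (EL : {set E}) (s t : V) (c d : E -> R).
(* Leader's edges EL, follower's edges ~: EL. *)

Definition follower_opt_str (X Y : {set E}) : Prop :=
  [/\ Y \subset ~: EL, st_path directed tl hd s t (X :|: Y)
    & forall Y' : {set E}, Y' \subset ~: EL -> st_path directed tl hd s t (X :|: Y') ->
                 cost d Y <= cost d Y'].

Definition contains_st_path (Z : {set E}) : Prop :=
  exists P, st_path directed tl hd s t P /\ P \subset Z.

Definition follower_opt_weak (X Y : {set E}) : Prop :=
  [/\ Y \subset ~: EL, contains_st_path (X :|: Y)
    & forall Y' : {set E}, Y' \subset ~: EL -> contains_st_path (X :|: Y') ->
                 cost d Y <= cost d Y'].

(* Optimal values (optimistic setting; infeasible leader choices excluded);
   the infimum of the empty set is +oo. *)
Local Open Scope classical_set_scope.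
Definition OPT_str : \bar R :=
  ereal_inf [set (cost c (p.1 :|: p.2)%SET)%:E |
              p in [set p : {set E} * {set E} |
                    (p.1 \subset EL)%SET /\ follower_opt_str p.1 p.2]].

Definition OPT_weak : \bar R :=
  ereal_inf [set (cost c (p.1 :|: p.2)%SET)%:E |
              p in [set p : {set E} * {set E} |
                    (p.1 \subset EL)%SET /\ follower_opt_weak p.1 p.2]].
End Bilevel.

(* Main.v *)
Require Import Defs.
From HB Require Import structures.
From mathcomp Require Import all_boot all_order all_algebra.
From mathcomp Require Import boolp classical_sets reals constructive_ereal ereal.
Import Order.TTheory GRing.Theory Num.Theory.
Local Open Scope ring_scope.

Lemma cost_sub (R : realType) (E : finType) (f : E -> R) (A B : {set E}) :
  (forall e, 0 <= f e) -> A \subset B -> cost f A <= cost f B.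
Proof.
move=> f0 AB; rewrite /cost [X in _ <= X](big_mkcond (fun e => e \in B)).
rewrite (big_mkcond (fun e => e \in A)) /=.
apply: ler_sum => e _; case: ifP => eA.
  by rewrite (fintype.subsetP AB _ eA).
by case: ifP.
Qed.
Arguments cost_sub {R E f A B}.

Theorem corollary3p5 (R : realType) (V E : finType) (directed : bool)
    (tl hd : E -> V) (EL : {set E}) (s t : V) (c d : E -> R) :
  simple_graph directed tl hd ->
  (forall e, 0 <= c e) -> (forall e, 0 <= d e) ->
  (exists P, st_path directed tl hd s t P) ->
  (OPT_str directed tl hd EL s t c d <= OPT_weak directed tl hd EL s t c d)%E.
Proof.
move=> _ c0 d0 _.
apply: le_ereal_inf_tmp => _ [[X Y] /= [XEL [YEL [P [HP PXY]] Yopt]] <-].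
have PELX : P :&: EL \subset X.
  apply/fintype.subsetP => e; rewrite inE => /andP [eP eEL].
  move: (fintype.subsetP PXY e eP); rewrite inE => /orP [//|eY].
  by move: (fintype.subsetP YEL e eY); rewrite inE eEL.
have PnEL : P :\: EL \subset Y.
  apply/fintype.subsetP => e; rewrite inE => /andP [eEL eP].
  move: (fintype.subsetP PXY e eP); rewrite inE => /orP [eX|//].
  by move: (fintype.subsetP XEL e eX); rewrite (negbTE eEL).
have PU : (P :&: EL) :|: (P :\: EL) = P.
  by apply/setP => e; rewrite !inE; case: (e \in P); case: (e \in EL).
apply: ge_ereal_inf.
exists (cost c P)%:E; last by rewrite lee_fin; exact: cost_sub.
exists (P :&: EL, P :\: EL); last by rewrite /= PU.
split; first by apply/fintype.subsetP => e; rewrite inE => /andP [].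
rewrite /follower_opt_str /= PU; split => //.
- by apply/fintype.subsetP => e; rewrite !inE => /andP [].
- move=> Y' Y'EL HQ.
  have H1 := cost_sub d0 PnEL.
  have H2 : cost d Y <= cost d Y'.
    apply: Yopt => //.
    exists ((P :&: EL) :|: Y'); split => //.
    by apply: finset.setSU.
  exact: (le_trans H1 H2).
Qed.
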